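(* Let $R$ be a commutative noetherian domain, $\sigma\in\operatorname{Aut}_\Bbbk(R)$, $H,J$ ideals of $R$, and $B=R(t,\sigma,H,J)$. Suppose that $\sigma^n(\mathfrak p)\neq\mathfrak p$ for every maximal ideal $\mathfrak p$ of $R$ and every integer $n\neq0$. Then every two-sided ideal of $B$ is graded (i.e. generated by homogeneous elements for the $\mathbb Z$-grading $B=\bigoplus_n I^{(n)}t^n$).
   Context: $\Bbbk$ is a field; all algebras are associative unital $\Bbbk$-algebras. For an algebra $R$ and $\sigma\in\operatorname{Aut}_\Bbbk(R)$, $R[t,t^{-1};\sigma]$ is the skew Laurent ring: generated over $R$ by $t,t^{-1}$ with $tt^{-1}=t^{-1}t=1$ and $t^{\pm1}r=\sigma^{\pm1}(r)t^{\pm1}$ for $r\in R$. Given two-sided ideals $H,J$ of $R$, set $I^{(0)}=R$, $I^{(n)}=J\sigma(J)\cdots\sigma^{n-1}(J)$ for $n\ge1$, and $I^{(n)}=\sigma^{-1}(H)\sigma^{-2}(H)\cdots\sigma^{n}(H)$ for $n\le-1$; it is assumed throughout that $I^{(n)}\neq0$ for all $n\in\mathbb Z$. The Bell–Rogalski (BR) algebra is $R(t,\sigma,H,J)=\bigoplus_{n\in\mathbb Z}I^{(n)}t^n\subseteq R[t,t^{-1};\sigma]$. *)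

(* Defs.v *)
From HB Require Import structures.
From mathcomp Require Import all_boot all_order all_algebra.
Set Implicit Arguments. Unset Strict Implicit. Unset Printing Implicit Defensive.
Import GRing.Theory.
Local Open Scope ring_scope.

Definition is_ideal (R : comPzRingType) (P : R -> Prop) : Prop :=
  P 0 /\ (forall x y, P x -> P y -> P (x + y)) /\ (forall r x, P x -> P (r * x)).

Definition is_maximal_ideal (R : comPzRingType) (P : R -> Prop) : Prop :=
  is_ideal P /\ ~ P 1 /\
  forall Q : R -> Prop, is_ideal Q -> (forall x, P x -> Q x) ->
    (forall x, Q x -> P x) \/ Q 1.

Definition noetherian (R : comPzRingType) : Prop :=
  forall I : nat -> R -> Prop, (forall n, is_ideal (I n)) ->
    (forall n x, I n x -> I n.+1 x) ->
    exists N, forall n x, (N <= n)%N -> I n x -> I N x.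

Definition is_domain (R : comPzRingType) : Prop :=
  (1 : R) != 0 /\ forall a b : R, a * b = 0 -> a = 0 \/ b = 0.

(* sigma^z for z : int, given sigma and its inverse sigmai *)
Definition spow (R : Type) (s si : R -> R) (z : int) : R -> R :=
  match z with Posz n => iter n s | Negz n => iter n.+1 si end.

Definition img (R : Type) (f : R -> R) (P : R -> Prop) : R -> Prop :=
  fun y => exists2 x, P x & y = f x.

Definition ideal_prod (R : pzRingType) (A B : R -> Prop) : R -> Prop :=
  fun x => exists s : seq (R * R),
    (forall p, p \in s -> A p.1 /\ B p.2) /\ x = \sum_(p <- s) p.1 * p.2.

(* Jpow n = J sigma(J) ... sigma^{n-1}(J)  (Jpow 0 = R) *)
Fixpoint Jpow (R : pzRingType) (s : R -> R) (J : R -> Prop) (n : nat) : R -> Prop :=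
  match n with
  | 0 => fun _ => True
  | n'.+1 => ideal_prod (Jpow s J n') (img (iter n' s) J)
  end.

(* Hpow m = sigma^{-1}(H) ... sigma^{-m}(H)  (Hpow 0 = R) *)
Fixpoint Hpow (R : pzRingType) (si : R -> R) (H : R -> Prop) (m : nat) : R -> Prop :=
  match m with
  | 0 => fun _ => True
  | m'.+1 => ideal_prod (Hpow si H m') (img (iter m'.+1 si) H)
  end.

Definition BRI (R : pzRingType) (s si : R -> R) (H J : R -> Prop) (z : int) : R -> Prop :=
  match z with Posz n => Jpow s J n | Negz n => Hpow si H n.+1 end.

(* Elements of the skew Laurent ring R[t,t^-1;sigma] are represented by
   formal sums  sum a_i t^{n_i}, i.e. lists of pairs (n_i, a_i); the element
   they denote is the coefficient function. *)
Definition coef (R : pzRingType) (f : seq (int * R)) (n : int) : R :=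
  \sum_(p <- f | p.1 == n) p.2.

(* product:  (a t^m)(b t^n) = a sigma^m(b) t^(m+n) *)
Definition lmul (R : pzRingType) (s si : R -> R) (f g : seq (int * R)) : seq (int * R) :=
  [seq (p.1 + q.1, p.2 * spow s si p.1 q.2) | p <- f, q <- g].

(* membership in B = R(t,sigma,H,J) = (+)_n I^(n) t^n *)
Definition inBR (R : pzRingType) (s si : R -> R) (H J : R -> Prop) (f : seq (int * R)) : Prop :=
  forall n : int, BRI s si H J n (coef f n).

(* two-sided ideal of B (as a set of coefficient functions) *)
Definition is_BR_ideal (R : pzRingType) (s si : R -> R) (H J : R -> Prop)
    (A : (int -> R) -> Prop) : Prop :=
  [/\ forall F, A F -> exists2 f, F = coef f & inBR s si H J f,
      A (fun _ => 0),
      forall f g, A (coef f) -> A (coef g) -> A (coef (f ++ g)),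
      forall f, A (coef f) -> A (coef [seq (p.1, - p.2) | p <- f]) &
      forall b f, inBR s si H J b -> A (coef f) ->
        A (coef (lmul s si b f)) /\ A (coef (lmul s si f b))].

(* graded ideal: generated (as a two-sided ideal of B) by homogeneous elements
   a t^n lying in it, i.e. every element is a finite sum of b (a t^n) c. *)
Definition is_graded_BR_ideal (R : pzRingType) (s si : R -> R) (H J : R -> Prop)
    (A : (int -> R) -> Prop) : Prop :=
  forall F, A F ->
    exists l : seq (seq (int * R) * (int * R) * seq (int * R)),
      (forall t, t \in l ->
         [/\ inBR s si H J t.1.1, A (coef [:: t.1.2]) & inBR s si H J t.2]) /\
      F = coef (flatten [seq lmul s si (lmul s si t.1.1 [:: t.1.2]) t.2 | t <- l]).

(* Main.v *)
Require Import Defs.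
From HB Require Import structures.
From mathcomp Require Import all_boot all_order all_algebra.
From Stdlib Require Import Classical ClassicalEpsilon FunctionalExtensionality.
Set Implicit Arguments. Unset Strict Implicit.
Import GRing.Theory.
Local Open Scope ring_scope.

Definition rmf (R : pzRingType) (f : R -> R) :=
  (forall x y, f (x + y) = f x + f y) /\ (forall x y, f (x * y) = f x * f y) /\ f 1 = 1.

Lemma rmf0 (R : pzRingType) (f : R -> R) : rmf f -> f 0 = 0.
Proof. move=> [fD _]; apply: (@addrI _ (f 0)); by rewrite -fD !addr0. Qed.

Lemma rmfN (R : pzRingType) (f : R -> R) x : rmf f -> f (- x) = - f x.
Proof. move=> hf; apply/eqP; rewrite -addr_eq0 -(proj1 hf) addNr rmf0 //. Qed.

Lemma rmfB (R : pzRingType) (f : R -> R) x y : rmf f -> f (x - y) = f x - f y.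
Proof. by move=> hf; rewrite (proj1 hf) rmfN. Qed.

Lemma rmf_iter (R : pzRingType) (f : R -> R) n : rmf f -> rmf (iter n f).
Proof.
move=> [fD [fM f1]]; elim: n => [|n [iD [iM i1]]].
  by split=> //; split.
by split; [move=> x y; rewrite !iterS iD fD|split; [move=> x y; rewrite !iterS iM fM|rewrite iterS i1 f1]].
Qed.

Lemma rmf_inv (R : pzRingType) (s si : R -> R) :
  cancel s si -> cancel si s -> rmf s -> rmf si.
Proof.
move=> sK siK [sD [sM s1]]; have si_inj := can_inj sK.
split; [move=> x y|split; [move=> x y|]]; apply: si_inj.
- by rewrite siK sD !siK.
- by rewrite siK sM !siK.
- by rewrite siK s1.
Qed.

Lemma rmf_spow (R : pzRingType) (s si : R -> R) z :
  cancel s si -> cancel si s -> rmf s -> rmf (spow s si z).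
Proof.
move=> sK siK hs; case: z => n /=; first exact: rmf_iter.
exact/rmf_iter/(rmf_inv sK siK).
Qed.

Lemma spowS (R : pzRingType) (s si : R -> R) z x :
  cancel s si -> cancel si s -> spow s si (z + 1) x = s (spow s si z x).
Proof.
move=> sK siK; case: z => [n|n].
- have -> : (Posz n + 1 = Posz n.+1)%R by rewrite -addn1 PoszD.
  by [].
- case: n => [|n].
  + by rewrite /= siK.
  + have -> : (Negz n.+1 + 1 = Negz n)%R by rewrite !NegzE -addn1 PoszD opprD addrK.
    by rewrite /= siK.
Qed.

Lemma spowP (R : pzRingType) (s si : R -> R) z x :
  cancel s si -> cancel si s -> spow s si (z - 1) x = si (spow s si z x).
Proof.
move=> sK siK; by rewrite -{2}(subrK 1 z) spowS // sK.
Qed.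

Lemma spow_add (R : pzRingType) (s si : R -> R) a b x :
  cancel s si -> cancel si s -> spow s si (a + b) x = spow s si a (spow s si b x).
Proof.
move=> sK siK; case: a => n.
- elim: n => [|n IH]; first by rewrite add0r.
  have -> : (Posz n.+1 + b = (Posz n + b) + 1)%R by rewrite -addn1 PoszD addrAC.
  by rewrite spowS // IH.
- elim: n => [|n IH].
  + have -> : (Negz 0 + b = b - 1)%R by rewrite NegzE addrC.
    by rewrite spowP.
  + have -> : (Negz n.+1 + b = (Negz n + b) - 1)%R.
      by rewrite !NegzE -addn1 PoszD opprD addrAC.
    by rewrite spowP // IH.
Qed.

Lemma exists_max (R : comPzRingType) (Q : R -> Prop) :
  noetherian R -> is_ideal Q -> ~ Q 1 ->
  exists p, is_maximal_ideal p /\ (forall x, Q x -> p x).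
Proof.
move=> noeth Qid nQ1; apply: NNPP => hno.
pose good (P : R -> Prop) := is_ideal P /\ ~ P 1 /\ (forall x, Q x -> P x).
pose T := {P : R -> Prop | good P}.
have step : forall P : T, exists P' : T,
    (forall x, proj1_sig P x -> proj1_sig P' x) /\ ~ (forall x, proj1_sig P' x -> proj1_sig P x).
  move=> [P [Pid [nP1 QP]]] /=.
  have : ~ is_maximal_ideal P by move=> pm; apply: hno; exists P.
  move=> nmax.
  have : exists Q', ~ (is_ideal Q' -> (forall x, P x -> Q' x) ->
              (forall x, Q' x -> P x) \/ Q' 1).
    apply: not_all_ex_not => hall; apply: nmax; split=> //; split=> //.
  move=> [Q' hQ'].
  have Q'id : is_ideal Q' by apply: NNPP => h; apply: hQ' => /h.
  have PQ' : forall x, P x -> Q' x by apply: NNPP => h; apply: hQ' => _ /h.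
  have nQ'1 : ~ Q' 1 by move=> h; apply: hQ' => _ _; right.
  have nQ'P : ~ (forall x, Q' x -> P x) by move=> h; apply: hQ' => _ _; left.
  have gQ' : good Q'.
    by split=> //; split=> // x /QP /PQ'.
  by exists (exist _ Q' gQ').
pose f (P : T) : T := proj1_sig (constructive_indefinite_description _ (step P)).
have hf : forall P : T, (forall x, proj1_sig P x -> proj1_sig (f P) x) /\
    ~ (forall x, proj1_sig (f P) x -> proj1_sig P x).
  by move=> P; exact: (proj2_sig (constructive_indefinite_description _ (step P))).
have gQ : good Q by split=> //; split.
pose I n := proj1_sig (iter n f (exist _ Q gQ)).
have [N hN] := noeth I (fun n => proj1 (proj2_sig (iter n f (exist _ Q gQ))))
  (fun n x hx => proj1 (hf (iter n f (exist _ Q gQ))) x hx).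
apply: (proj2 (hf (iter N f (exist _ Q gQ)))) => x hx.
exact: (hN N.+1 x (leqnSn N) hx).
Qed.

Lemma key_lemma (R : comPzRingType) (s si : R -> R) :
  cancel s si -> cancel si s -> rmf s -> noetherian R ->
  (forall p : R -> Prop, is_maximal_ideal p -> forall n : int, n != 0 ->
     ~ (forall x, img (spow s si n) p x <-> p x)) ->
  forall n n1 : int, n != n1 -> forall Q : R -> Prop, is_ideal Q ->
    (forall r, Q (spow s si n r - spow s si n1 r)) -> Q 1.
Proof.
move=> sK siK hs noeth hmax n n1 nn1 Q [Q0 [QD QM]] hQ.
have r1 := rmf_spow n1 sK siK hs.
pose m := n - n1.
have mnz : m != 0 by rewrite subr_eq0.
pose Q' x := Q (spow s si n1 x).
have Q'id : is_ideal Q'.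
  split; first by rewrite /Q' rmf0.
  split; first by move=> x y hx hy; rewrite /Q' (proj1 r1); exact: QD.
  by move=> r x hx; rewrite /Q' (proj1 (proj2 r1)); exact: QM.
have hQ' : forall y, Q' (spow s si m y - y).
  move=> y; rewrite /Q' rmfB // -spow_add //.
  have -> : n1 + m = n by rewrite /m addrC subrK.
  exact: hQ.
case: (classic (Q' 1)) => [h|h].
  by move: h; rewrite /Q' (proj2 (proj2 r1)).
have [p [pm Q'p]] := exists_max noeth Q'id h.
exfalso; apply: (hmax p pm m mnz) => x.
have [[p0 [pD pM]] _] := pm.
split.
- move=> [y py ->].
  rewrite -(subrK y (spow s si m y)); apply: pD => //; exact/Q'p/hQ'.
- move=> px; exists (spow s si (- m) x); last first.
    by rewrite -spow_add // subrr.
  set y := spow s si (- m) x.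
  have hxy : p (x - y).
    have := Q'p _ (hQ' y); by rewrite /y -spow_add // subrr.
  have -> : y = x + (-1) * (x - y) by rewrite mulN1r opprB addrC subrK.
  by apply: pD => //; apply: pM.
Qed.

Lemma delta_def (R : pzRingType) (n : int) (a : R) m :
  coef [:: (n, a)] m = if n == m then a else 0.
Proof. by rewrite /coef big_cons big_nil /=; case: eqP => // _; rewrite addr0. Qed.

Lemma graded_main (R : comPzRingType) (sp : int -> R -> R) (A : (int -> R) -> Prop)
 (h0 : A (fun _ => 0))
 (hadd : forall F G, A F -> A G -> A (fun n => F n + G n))
 (hopp : forall F, A F -> A (fun n => - F n))
 (hl : forall r F, A F -> A (fun n => r * F n))
 (hr : forall r F, A F -> A (fun n => F n * sp n r))
 (hkey : forall n n1, n != n1 -> forall Q : R -> Prop, is_ideal Q ->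
     (forall r, Q (sp n r - sp n1 r)) -> Q 1) :
 forall k (S : seq int) F, (size S <= k)%N -> A F ->
   (forall m, m \notin S -> F m = 0) -> forall n, A (coef [:: (n, F n)]).
Proof.
elim=> [|k IH] S F hS hF hsup n.
  have -> : coef [:: (n, F n)] = fun _ => 0.
    apply: functional_extensionality => m.
    rewrite delta_def hsup; first by case: eqP.
    by case: S hS hsup.
  exact: h0.
case: (boolP (has (predC1 n) S)) => [/hasP [n2 n2S /= n2n] | hno].
  pose Q := fun x => A (coef [:: (n, x * F n)]).
  have Qid : is_ideal Q.
    split.
      rewrite /Q; have -> : coef [:: (n, 0 * F n)] = fun _ => 0.
        by apply: functional_extensionality => m; rewrite delta_def mul0r; case: eqP.
      exact: h0.
    split.
      move=> x y hx hy; rewrite /Q.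
      have -> : coef [:: (n, (x + y) * F n)] =
          fun m => coef [:: (n, x * F n)] m + coef [:: (n, y * F n)] m.
        apply: functional_extensionality => m; rewrite !delta_def.
        by case: eqP => _; rewrite ?mulrDl ?addr0.
      exact: hadd.
    move=> r x hx; rewrite /Q.
    have -> : coef [:: (n, (r * x) * F n)] = fun m => r * coef [:: (n, x * F n)] m.
      apply: functional_extensionality => m; rewrite !delta_def.
      by case: eqP => _; rewrite ?mulrA ?mulr0.
    exact: hl.
  have hQ : forall r, Q (sp n r - sp n2 r).
    move=> r; pose G := fun m => F m * sp m r + - (sp n2 r * F m).
    have AG : A G := hadd _ _ (hr r F hF) (hopp _ (hl _ _ hF)).
    have sz : (size (filter (predC1 n2) S) <= k)%N.
      have hc := count_predC (predC1 n2) S.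
      have : (0 < count (predC (predC1 n2)) S)%N.
        by rewrite -has_count; apply/hasP; exists n2 => //=; rewrite eqxx.
      rewrite size_filter; move: hS; rewrite -hc => hS hp.
      move: hS hp; set a := count _ S; set b := count _ S => hS hp.
      rewrite -ltnS; apply: leq_trans hS; by rewrite -{1}(addn0 a) ltn_add2l.
    have hsupG : forall m, m \notin filter (predC1 n2) S -> G m = 0.
      move=> m; rewrite mem_filter /= negb_and negbK; case/orP => [/eqP -> | /hsup Fm].
        by rewrite /G mulrC subrr.
      by rewrite /G Fm mul0r mulr0 oppr0 addr0.
    have := IH _ G sz AG hsupG n.
    have -> : G n = (sp n r - sp n2 r) * F n by rewrite /G mulrBl mulrC.
    by [].
  have := hkey n n2 _ Q Qid hQ.
  rewrite /Q mul1r; apply; by rewrite eq_sym.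
have -> : coef [:: (n, F n)] = F; last exact: hF.
apply: functional_extensionality => m; rewrite delta_def.
case: eqP => [<-//|nm]; symmetry; apply: hsup; apply/negP => mS.
move/hasPn: hno => /(_ m mS) /=; rewrite negbK => /eqP mn.
by apply: nm.
Qed.

Lemma coef_cat (R : pzRingType) (f g : seq (int * R)) n :
  coef (f ++ g) n = coef f n + coef g n.
Proof. by rewrite /coef big_cat. Qed.

Lemma coef_opp (R : pzRingType) (f : seq (int * R)) n :
  coef [seq (p.1, - p.2) | p <- f] n = - coef f n.
Proof. by rewrite /coef big_map sumrN. Qed.

Lemma coef_flatten (R : pzRingType) (L : seq (seq (int * R))) n :
  coef (flatten L) n = \sum_(l <- L) coef l n.
Proof.
elim: L => [|l L IH]; first by rewrite /coef !big_nil.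
by rewrite /= coef_cat IH big_cons.
Qed.

Lemma coef_lmul_l (R : pzRingType) (s si : R -> R) r (f : seq (int * R)) n :
  coef (lmul s si [:: (0, r)] f) n = r * coef f n.
Proof.
rewrite /lmul /= cats0 /coef big_map mulr_sumr.
by apply: eq_big => q /=; rewrite ?add0r.
Qed.

Lemma coef_lmul_r (R : pzRingType) (s si : R -> R) r (f : seq (int * R)) n :
  coef (lmul s si f [:: (0, r)]) n = coef f n * spow s si n r.
Proof.
rewrite /lmul coef_flatten big_map /coef mulr_suml [RHS]big_mkcond /=.
apply: eq_bigr => p _; rewrite big_cons big_nil /= addr0.
by case: eqP => [->|]; rewrite ?addr0.
Qed.

Lemma BRI0 (R : pzRingType) (s si : R -> R) H J n : BRI s si H J n 0.
Proof.
case: n => [[|k]|k] //=; exists [::]; split=> //; by rewrite big_nil.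
Qed.

Lemma inBR1 (R : pzRingType) (s si : R -> R) H J (r : R) : inBR s si H J [:: (0, r)].
Proof.
move=> n; rewrite delta_def; case: eqP => [<-|_] //; exact: BRI0.
Qed.

Theorem proposition2p2 (k : fieldType) (R : comAlgType k)
    (sigma : {lrmorphism R -> R}) (sigmai : R -> R) (H J : R -> Prop) :
  cancel sigma sigmai -> cancel sigmai sigma ->
  noetherian R -> is_domain R ->
  is_ideal H -> is_ideal J ->
  (forall n : int, exists2 x, BRI sigma sigmai H J n x & x != 0) ->
  (forall p : R -> Prop, is_maximal_ideal p -> forall n : int, n != 0 ->
     ~ (forall x, img (spow sigma sigmai n) p x <-> p x)) ->
  forall A : (int -> R) -> Prop,
    is_BR_ideal sigma sigmai H J A -> is_graded_BR_ideal sigma sigmai H J A.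
Proof.
move=> sK siK noeth _ _ _ _ hmax A [hfin h0 happ hneg hmul] F hF.
have rs : rmf sigma.
  split; first by move=> x y; rewrite rmorphD.
  split; first by move=> x y; rewrite rmorphM.
  by rewrite rmorph1.
have hadd : forall F G, A F -> A G -> A (fun n => F n + G n).
  move=> F1 G1 hF1 hG1; have [f1 e1 _] := hfin _ hF1; have [g1 e2 _] := hfin _ hG1.
  subst F1 G1; have := happ _ _ hF1 hG1.
  have -> // : coef (f1 ++ g1) = fun n => coef f1 n + coef g1 n.
  by apply: functional_extensionality => n; rewrite coef_cat.
have hopp : forall F, A F -> A (fun n => - F n).
  move=> F1 hF1; have [f1 e1 _] := hfin _ hF1; subst F1; have := hneg _ hF1.
  have -> // : coef [seq (p.1, - p.2) | p <- f1] = fun n => - coef f1 n.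
  by apply: functional_extensionality => n; rewrite coef_opp.
have hl : forall r F, A F -> A (fun n => r * F n).
  move=> r F1 hF1; have [f1 e1 _] := hfin _ hF1; subst F1.
  have := proj1 (hmul _ _ (inBR1 sigma sigmai H J r) hF1).
  have -> // : coef (lmul sigma sigmai [:: (0, r)] f1) = fun n => r * coef f1 n.
  by apply: functional_extensionality => n; rewrite coef_lmul_l.
have hr : forall r F, A F -> A (fun n => F n * spow sigma sigmai n r).
  move=> r F1 hF1; have [f1 e1 _] := hfin _ hF1; subst F1.
  have := proj2 (hmul _ _ (inBR1 sigma sigmai H J r) hF1).
  have -> // : coef (lmul sigma sigmai f1 [:: (0, r)]) =
      fun n => coef f1 n * spow sigma sigmai n r.
  by apply: functional_extensionality => n; rewrite coef_lmul_r.
have hkey := key_lemma sK siK rs noeth hmax.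
have [f Ff _] := hfin F hF.
pose S := [seq p.1 | p <- f].
have hsup : forall m, m \notin S -> F m = 0.
  move=> m mS; rewrite Ff /coef big1_seq // => p /andP [/eqP pm pf].
  by move: mS; rewrite -pm (map_f (fun p : int * R => p.1) pf).
have hcomp := graded_main h0 hadd hopp hl hr hkey (leqnn (size S)) hF hsup.
exists [seq ([:: (0, 1)], (n, F n), [:: (0, 1)]) | n <- undup S]; split.
  move=> t /mapP [n _ ->] /=; split; [exact: inBR1 | exact: hcomp | exact: inBR1].
apply: functional_extensionality => m.
rewrite coef_flatten -map_comp big_map.
rewrite (eq_bigr (fun i => if i == m then F i else 0)); last first.
  move=> i _ /=; rewrite /lmul /= delta_def add0r addr0 mul1r.
  by rewrite (proj2 (proj2 (rmf_spow _ sK siK rs))) mulr1.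
case: (boolP (m \in undup S)) => mS.
  rewrite (bigD1_seq m) ?undup_uniq //= eqxx big1 ?addr0 // => i /negPf ->.
  by [].
rewrite big1_seq.
  by rewrite hsup // -mem_undup.
move=> i /andP [_ iS]; case: eqP => // im.
by move: iS mS; rewrite im => ->.
Qed.
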